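(* Let $G$ be a connected edge-stable equimatchable graph with a cut vertex $v$. Then: (i) if $v$ is a weak vertex in $G$, then every vertex of $N(v)$ is a strong vertex in $G-v$; (ii) if $v$ is a strong vertex in $G$, then every vertex of $N(v)$ is a weak vertex in $G-v$, and moreover $G\setminus\{v,w\}$ is an edge-stable equimatchable graph for each $w\in N(v)$.
   Context: All graphs are finite and simple. A graph is equimatchable if all its maximal matchings have the same cardinality; an equimatchable graph $G$ is edge-stable if $G\setminus e$ (delete edge $e$, keep vertices) is equimatchable for every $e\in E(G)$. A vertex $v$ of a graph $H$ is strong in $H$ if every maximal matching of $H$ saturates $v$ (has $v$ as an endpoint of one of its edges), and weak otherwise. $G\setminus\{v,w\}$ is the subgraph induced by $V(G)\setminus\{v,w\}$. *)

(* Defs.v *)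
(* Finite simple graphs on a finite vertex type T,
   represented by a vertex set and a set of 2-element edges. *)
From mathcomp Require Import all_boot.
Set Implicit Arguments. Unset Strict Implicit. Unset Printing Implicit Defensive.

Record graph (T : finType) := Graph { verts : {set T}; edges : {set {set T}} }.

Section Defs.
Variable T : finType.
Implicit Types (G : graph T) (v w : T) (M : {set {set T}}) (e : {set T}).

Definition simple_graph G : Prop :=
  forall e, e \in edges G -> e \subset verts G /\ #|e| = 2.

Definition adj G : rel T := fun x y => [set x; y] \in edges G.

Definition nbhd G v : {set T} := [set w | adj G v w].

Definition del_edge G e : graph T := Graph (verts G) (edges G :\ e).

Definition del_verts G (S : {set T}) : graph T :=
  Graph (verts G :\: S) [set f in edges G | [disjoint f & S]].

Definition del_vertex G v : graph T := del_verts G [set v].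

Definition matching G M : Prop :=
  M \subset edges G /\
  (forall e1 e2, e1 \in M -> e2 \in M -> e1 != e2 -> [disjoint e1 & e2]).

Definition maximal_matching G M : Prop :=
  matching G M /\ (forall M', matching G M' -> M \subset M' -> M' = M).

Definition equimatchable G : Prop :=
  forall M1 M2, maximal_matching G M1 -> maximal_matching G M2 -> #|M1| = #|M2|.

Definition edge_stable G : Prop :=
  equimatchable G /\ forall e, e \in edges G -> equimatchable (del_edge G e).

Definition saturates M v : Prop := exists2 e, e \in M & v \in e.

Definition strong G v : Prop :=
  v \in verts G /\ forall M, maximal_matching G M -> saturates M v.

Definition weak G v : Prop :=
  v \in verts G /\ ~ (forall M, maximal_matching G M -> saturates M v).

Definition connected G : Prop :=
  forall x y, x \in verts G -> y \in verts G -> connect (adj G) x y.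

(* v is a cut vertex: deleting it disconnects two vertices that were
   connected in G (i.e. the number of components increases) *)
Definition cut_vertex G v : Prop :=
  v \in verts G /\
  exists x y, [/\ x \in verts G :\ v, y \in verts G :\ v,
                  connect (adj G) x y & ~~ connect (adj (del_vertex G v)) x y].
End Defs.

(* Main.v *)
Require Import Defs.
From mathcomp Require Import all_boot zify.
From Stdlib Require Import Classical.
Set Implicit Arguments. Unset Strict Implicit. Unset Printing Implicit Defensive.

Section Aux.
Variable T : finType.
Implicit Types (G : graph T) (M : {set {set T}}) (e f g : {set T}).

Lemma djP (A B : {set T}) :
  reflect (forall x, x \in A -> x \in B -> False) [disjoint A & B].
Proof.
rewrite disjoint_subset; apply: (iffP subsetP) => h x.
  by move=> xA xB; have := h x xA; rewrite inE xB.
by move=> xA; rewrite inE; apply/negP => xB; exact: h x xA xB.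
Qed.

Lemma dj2 (x y : T) (A : {set T}) : x \notin A -> y \notin A -> [disjoint [set x; y] & A].
Proof.
move=> hx hy; apply/djP => z; rewrite !inE => /orP[]/eqP-> h.
  by rewrite h in hx.
by rewrite h in hy.
Qed.

Lemma djW f g (A : {set T}) : f \subset A -> [disjoint g & A] -> [disjoint f & g].
Proof.
move=> /subsetP s /djP d; apply/djP => z zf zg; exact: d z zg (s z zf).
Qed.

Lemma adj_sym G : symmetric (adj G).
Proof. by move=> x y; rewrite /adj setUC. Qed.

Lemma matching_sub G M M' : matching G M -> M' \subset M -> matching G M'.
Proof.
case=> sME dis sub; split; first exact: subset_trans sub sME.
by move=> e1 e2 /(subsetP sub) h1 /(subsetP sub) h2; apply: dis.
Qed.

Lemma matching_add G M f : matching G M -> f \in edges G ->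
  (forall g, g \in M -> g != f -> [disjoint f & g]) -> matching G (f |: M).
Proof.
case=> sME dis hf hd; split.
  apply/subsetP=> g; rewrite in_setU1 => /orP[/eqP->//|]; exact: (subsetP sME).
move=> e1 e2; rewrite !in_setU1 => /orP[/eqP->|h1] /orP[/eqP->|h2] ne.
- by rewrite eqxx in ne.
- by apply: hd; rewrite // eq_sym.
- by rewrite disjoint_sym; apply: hd.
- exact: dis.
Qed.

Lemma max_add G M f : maximal_matching G M -> matching G (f |: M) -> f \in M.
Proof.
case=> _ hm h; have := hm _ h (subsetUr _ _) => E.
by rewrite -E setU11.
Qed.

Lemma sub_neq_lt (A B : {set {set T}}) : A \subset B -> A != B -> #|A| < #|B|.
Proof. by move=> s n; apply: proper_card; rewrite properEneq n s. Qed.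

Lemma ext_max G M : matching G M ->
  exists M', maximal_matching G M' /\ M \subset M'.
Proof.
move=> hM; have [n hn] := ubnP (#|edges G| - #|M|).
elim: n M hM hn => // n IH M hM hn.
case: (classic (forall M', matching G M' -> M \subset M' -> M' = M)) => [hmax|].
  by exists M; split.
move=> /not_all_ex_not [M' h]; have [hM' hh] := imply_to_and _ _ h; have [sub neq] := imply_to_and _ _ hh.
have lt : #|M| < #|M'|.
  by apply: sub_neq_lt => //; apply/eqP => E; apply: neq; rewrite E.
have le : #|M'| <= #|edges G| by apply: subset_leq_card; case: hM'.
have [M'' [h1 h2]] := IH M' hM' ltac:(lia).
by exists M''; split => //; exact: subset_trans sub h2.
Qed.

Lemma equim_del2 G v w : equimatchable G -> [set v; w] \in edges G ->
  equimatchable (del_verts G [set v; w]).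
Proof.
move=> heq hE; set S := [set v; w].
have key : forall M, maximal_matching (del_verts G S) M ->
   maximal_matching G (S |: M) /\ #|S |: M| = #|M|.+1.
  move=> M [[sME dis] hmax].
  have inM : forall g, g \in M -> g \in edges G /\ [disjoint g & S].
    by move=> g /(subsetP sME); rewrite /= inE => /andP[].
  have SnM : S \notin M.
    apply/negP => /inM [_ /djP d]; apply: (d v); by rewrite !inE eqxx.
  have mM : matching G M.
    split; last exact: dis.
    by apply/subsetP => g /inM [].
  have mS : matching G (S |: M).
    by apply: matching_add => // g /inM [_ d] _; rewrite disjoint_sym.
  split; last by rewrite cardsU1 SnM.
  split => // M' [sM' dM'] sub.
  have SM' : S \in M' by apply: (subsetP sub); rewrite setU11.
  have m2 : matching (del_verts G S) (M' :\ S).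
    split; last by move=> e1 e2 /setD1P[_ h1] /setD1P[_ h2]; apply: dM'.
    apply/subsetP => g /setD1P [gS gM]; rewrite /= inE (subsetP sM') //=.
    exact: dM'.
  have E : M' :\ S = M.
    apply: hmax => //; apply/subsetP => g gM; rewrite in_setD1 (subsetP sub).
      by rewrite andbT; apply/eqP => gE; move: SnM; rewrite -gE gM.
    by rewrite in_setU1 gM orbT.
  by rewrite -E setD1K.
move=> M1 M2 /key [h1 c1] /key [h2 c2].
by have := heq _ _ h1 h2; rewrite c1 c2; case.
Qed.


Lemma cardsU_dj (A B : {set {set T}}) : (forall f, f \in A -> f \notin B) ->
  #|A :|: B| = #|A| + #|B|.
Proof.
move=> h; have E : A :&: B = set0.
  apply/setP => f; rewrite inE in_set0; apply/negP => /andP [fa fb].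
  by have := h f fa; rewrite fb.
by have := cardsUI A B; rewrite E cards0 addn0.
Qed.

Lemma matching_dv G S M : matching (del_verts G S) M -> matching G M.
Proof.
case=> s d; split => //; apply/subsetP => f /(subsetP s); rewrite /= inE.
by case/andP.
Qed.

Lemma edge_stable_del2 G v w : edge_stable G -> [set v; w] \in edges G ->
  edge_stable (del_verts G [set v; w]).
Proof.
move=> [heq hes] hE; split; first exact: equim_del2.
move=> e; rewrite /= inE => /andP [eE dis].
have -> : del_edge (del_verts G [set v; w]) e = del_verts (del_edge G e) [set v; w].
  rewrite /del_edge /del_verts /=; congr Graph; apply/setP => f; rewrite !inE.
  by case: (f != e); case: (f \in edges G).
apply: equim_del2; first exact: hes.
rewrite /= in_setD1 hE andbT; apply/eqP => Ee; move/djP: dis => d.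
by apply: (d v); [rewrite -Ee | ]; rewrite !inE eqxx.
Qed.

End Aux.

Lemma arith (x1 mc b0 a0 m x2 k b2 y z : nat) :
  x1 = (mc + b0).+1 -> a0 + b0 = m -> x2 = k + b2 -> k = mc.+1 ->
  y = (a0 + b2).+1 -> y <= z -> x1 = m -> x2 = m -> z = m -> False.
Proof. lia. Qed.

Theorem lemma4p4 (T : finType) (G : graph T) (v : T) :
  simple_graph G -> connected G -> edge_stable G -> cut_vertex G v ->
  (weak G v -> forall w, w \in nbhd G v -> strong (del_vertex G v) w) /\
  (strong G v ->
     (forall w, w \in nbhd G v -> weak (del_vertex G v) w) /\
     (forall w, w \in nbhd G v -> edge_stable (del_verts G [set v; w]))).
Proof.
move=> hS hC [heq hES] [vV [x [y [xV yV cxy ncxy]]]].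
set Gv := del_vertex G v.
have nbP : forall w, w \in nbhd G v ->
    [/\ [set v; w] \in edges G, w \in verts G & w != v].
  move=> w; rewrite inE /adj => hE; have [s c] := hS _ hE.
  split => //; first by apply: (subsetP s); rewrite !inE eqxx orbT.
  by apply/eqP => E; move: c; rewrite E setUid cards1.
have eGv : forall f, (f \in edges Gv) = (f \in edges G) && (v \notin f).
  by move=> f; rewrite /Gv /del_vertex /del_verts /= inE disjoint_sym disjoints1.
have vGv : forall t, (t \in verts Gv) = (t != v) && (t \in verts G).
  by move=> t; rewrite /Gv /del_vertex /del_verts /= !inE.
have mGv : forall M, matching Gv M -> matching G M.
  by move=> M; apply: matching_dv.
have nuns : forall (M : {set {set T}}) (t : T), ~ saturates M t -> forall f, f \in M -> t \notin f.
  by move=> M t ns f fM; apply/negP => tf; apply: ns; exists f.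
have partA : strong G v -> forall w, w \in nbhd G v -> weak Gv w.
  move=> [_ hsv] w /nbP [vwE wV wv].
  split; first by rewrite vGv wv wV.
  move=> hall; set vw := [set v; w].
  have m1 : matching G [set vw].
    split; first by rewrite sub1set.
    by move=> e1 e2 /set1P-> /set1P->; rewrite eqxx.
  have [X [hX sX]] := ext_max m1.
  have vwX : vw \in X by rewrite -sub1set.
  set P0 := X :\ vw.
  have mP0 : matching Gv P0.
    split; last by move=> e1 e2 /setD1P[_ h1] /setD1P[_ h2]; apply: hX.1.2.
    apply/subsetP => g /setD1P [gvw gX]; rewrite eGv (subsetP hX.1.1) //=.
    have /djP d := hX.1.2 g vw gX vwX gvw.
    by apply/negP => vg; apply: (d v vg); rewrite !inE eqxx.
  have [P [hP sP]] := ext_max mP0.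
  have [Q [hQ sQ]] := ext_max (mGv _ hP.1).
  have [e eP we] := hall P hP.
  have QP : P != Q.
    apply/eqP => QP; have [e' e'P ve'] := hsv Q hQ; rewrite -QP in e'P.
    by move: (subsetP hP.1.1 _ e'P); rewrite eGv ve' andbF.
  have PP : P0 != P.
    apply/eqP => PP; rewrite -PP in eP; move/setD1P: eP => [evw eX].
    have /djP d := hX.1.2 e vw eX vwX evw.
    by apply: (d w we); rewrite !inE eqxx orbT.
  have c1 := sub_neq_lt sP PP; have c2 := sub_neq_lt sQ QP.
  have c3 := cardsD1 vw X; rewrite vwX add1n in c3.
  have c4 := heq _ _ hX hQ.
  by have := leq_ltn_trans c1 c2; rewrite -c4 c3 ltnn.
split; last first.
  move=> hsv; split; first exact: partA.
  by move=> w /nbP [vwE _ _]; apply: edge_stable_del2.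
move=> [_ hnv] w /nbP [vwE wV wv].
split; first by rewrite vGv wv wV.
apply: NNPP => hnot.
have [M' hM'] := not_all_ex_not _ _ hnot.
have [hM'm hw'] := imply_to_and _ _ hM'.
have {}hw' := nuns _ _ hw'.
have [M0 hM0] := not_all_ex_not _ _ hnv.
have [hM0m hv0] := imply_to_and _ _ hM0.
have {}hv0 := nuns _ _ hv0.
have connGv : connect_sym (adj Gv) := sym_connect_sym (@adj_sym T Gv).
have conn_nv : forall a b, connect (adj Gv) a b -> a != v -> b != v.
  move=> a b /connectP [p]; case/lastP: p => [|q c] /=; first by move=> _ ->.
  rewrite rcons_path last_rcons => /andP [_ h] -> _.
  move: h; rewrite /adj eGv => /andP [_].
  by rewrite !inE => /norP [_]; rewrite eq_sym.
have find_u : forall z, z != v -> connect (adj G) z v ->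
    exists u, adj G v u /\ connect (adj Gv) z u.
  move=> z zv czv; apply: NNPP => hno.
  have cl : forall a b, connect (adj Gv) z a -> adj G a b -> connect (adj Gv) z b.
    move=> a b za ab.
    have av : a != v := conn_nv _ _ za zv.
    case: (eqVneq b v) => [bv|bv].
      by exfalso; apply: hno; exists a; split => //; rewrite adj_sym -bv.
    apply: connect_trans za (connect1 _).
    by move: ab; rewrite /adj eGv => -> /=; rewrite !inE; apply/norP; split; rewrite eq_sym.
  have cl2 : forall p a, connect (adj Gv) z a -> path (adj G) a p ->
      connect (adj Gv) z (last a p).
    elim=> //= c p IH a za /andP [ac hp]; exact: IH (cl _ _ za ac) hp.
  move/connectP: czv => [p hp vE].
  have := conn_nv _ _ (cl2 p z (connect0 _ _) hp) zv.
  by rewrite -vE eqxx.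
have [z [zV zv nwz]] : exists z, [/\ z \in verts G, z != v &
    ~~ connect (adj Gv) w z].
  move: xV yV; rewrite !in_setD1 => /andP [xv xV] /andP [yv yV].
  case: (boolP (connect (adj Gv) w x)) => wx; last by exists x.
  exists y; split => //; apply/negP => wy; apply: (negP ncxy).
  rewrite connGv in wx; exact: connect_trans wx wy.
have [u [avu zu]] := find_u z zv (hC z v zV vV).
have nwu : ~~ connect (adj Gv) w u.
  apply/negP => wu; rewrite connGv in zu; apply: (negP nwz).
  exact: connect_trans wu zu.
set C := [set t | connect (adj Gv) w t].
have inC : forall t, (t \in C) = connect (adj Gv) w t by move=> t; rewrite inE.
have wC : w \in C by rewrite inC connect0.
have vC : v \notin C by apply/negP; rewrite inC => /conn_nv /(_ wv); rewrite eqxx.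
have uC : u \notin C by rewrite inC.
have nonempty : forall f, f \in edges G -> exists t, t \in f.
  move=> f /hS [_ /eqP /cards2P [a [b [_ ->]]]]; exists a; by rewrite !inE eqxx.
have split5 : forall f, f \in edges Gv -> (f \subset C) || [disjoint f & C].
  move=> f fE; have := fE; rewrite eGv => /andP [fG _].
  have [_ /eqP /cards2P [a [b [ab fab]]]] := hS f fG.
  have hab : adj Gv a b by rewrite /adj -fab.
  have hba : adj Gv b a by rewrite adj_sym.
  case: (boolP (a \in C)) => aC.
    have bC : b \in C by move: aC; rewrite !inC => h; exact: connect_trans h (connect1 hab).
    by apply/orP; left; rewrite fab; apply/subsetP => t /set2P [] ->.
  apply/orP; right; rewrite fab; refine (dj2 aC _); apply/negP => bC; apply: (negP aC).
  by move: bC; rewrite !inC => h; exact: connect_trans h (connect1 hba).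
have split6 : forall f, f \in edges Gv -> ~~ (f \subset C) -> [disjoint f & C].
  by move=> f /split5 /orP [->|].
set SC := [set f : {set T} | f \subset C].
have inSC : forall f, (f \in SC) = (f \subset C) by move=> f; rewrite inE.
have M'Gv : forall f, f \in M' -> f \in edges Gv by move=> f; apply: (subsetP hM'm.1.1).
have M0G : forall f, f \in M0 -> f \in edges G by move=> f; apply: (subsetP hM0m.1.1).
have M0Gv : forall f, f \in M0 -> f \in edges Gv by move=> f fM; rewrite eGv M0G // hv0.
have M'G : forall f, f \in M' -> f \in edges G.
  by move=> f /M'Gv; rewrite eGv => /andP [].
have M'v : forall f, f \in M' -> v \notin f by move=> f /M'Gv; rewrite eGv => /andP [].
set vw := [set v; w].
set X1 := vw |: ((M' :&: SC) :|: (M0 :\: SC)).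
have mX1 : matching G X1.
  apply: matching_add => //.
    split.
      apply/subsetP => f; rewrite !inE => /orP [/andP [fM _]|/andP [_ fM]].
        exact: M'G. exact: M0G.
    move=> e1 e2; rewrite !inE => /orP [/andP [h1 c1]|/andP [c1 h1]] /orP [/andP [h2 c2]|/andP [c2 h2]].
    - exact: hM'm.1.2.
    - by move=> _; apply: djW c1 (split6 _ (M0Gv _ h2) c2).
    - by move=> _; rewrite disjoint_sym; apply: djW c2 (split6 _ (M0Gv _ h1) c1).
    - exact: hM0m.1.2.
  move=> g; rewrite !inE => /orP [/andP [gM gC]|/andP [gC gM]] _; apply: dj2.
  - exact: M'v. - exact: hw'.
  - exact: hv0.
  - by apply/negP => wg; move/djP: (split6 _ (M0Gv _ gM) gC) => d; exact: d w wg wC.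
have hX1 : maximal_matching G X1.
  split => // Z [sZ dZ] sub.
  apply/eqP; rewrite eqEsubset sub andbT; apply/subsetP => f fZ.
  have vwZ : vw \in Z by apply: (subsetP sub); rewrite setU11.
  case: (eqVneq f vw) => [->|fne]; first by rewrite setU11.
  have /djP dfvw := dZ _ _ fZ vwZ fne.
  have vf : v \notin f by apply/negP => vf; apply: (dfvw v vf); rewrite !inE eqxx.
  have fG : f \in edges G := subsetP sZ f fZ.
  have fGv : f \in edges Gv by rewrite eGv fG vf.
  have inX1 : forall g, g \in X1 -> g \in Z by move=> g; apply: (subsetP sub).
  rewrite !inE; case: (boolP (f \subset C)) => fC /=.
    suff fM' : f \in M' by rewrite fM' orbT.
    apply: (max_add hM'm); apply: matching_add => //; first exact: hM'm.1.
    move=> g gM' gf; case: (boolP (g \subset C)) => gC.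
      apply: dZ fZ _ _; last by rewrite eq_sym.
      by apply: inX1; rewrite !inE gM' gC orbT.
    exact: djW fC (split6 _ (M'Gv _ gM') gC).
  have dfC := split6 _ fGv fC.
  suff fM0 : f \in M0 by rewrite fM0 !orbT. apply: (max_add hM0m); apply: matching_add => //; first exact: hM0m.1.
  move=> g gM0 gf; case: (boolP (g \subset C)) => gC.
    by rewrite disjoint_sym; apply: djW gC dfC.
  apply: dZ fZ _ _; last by rewrite eq_sym.
  by apply: inX1; rewrite !inE gM0 gC /= !orbT.
have cX1 : #|X1| = (#|M' :&: SC| + #|M0 :\: SC|).+1.
  rewrite cardsU1 cardsU_dj; last by move=> f; rewrite !inE => /andP [_ ->].
  suff -> : vw \notin (M' :&: SC) :|: (M0 :\: SC) by [].
  rewrite !inE negb_or; apply/andP; split; apply/negP.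
    by move=> /andP [/M'v]; rewrite !inE eqxx.
  by move=> /andP [_ /hv0]; rewrite !inE eqxx.
have cM0 := cardsID SC M0.
set vu := [set v; u].
have vuE : vu \in edges G := avu.
set K := vu |: (M' :&: SC).
have mK : matching G K.
  apply: matching_add => //.
    exact: matching_sub (mGv _ hM'm.1) (subsetIl _ _).
  move=> g; rewrite !inE => /andP [gM gC] _; apply: dj2; first exact: M'v.
  by apply/negP => ug; apply: (negP uC); apply: (subsetP gC).
have [X2 [hX2 sKX2]] := ext_max mK.
set B2 := X2 :\: K.
have cX2 : #|X2| = #|K| + #|B2| by rewrite -(cardsID K X2) (setIidPr sKX2).
have cK : #|K| = (#|M' :&: SC|).+1.
  rewrite cardsU1; suff -> : vu \notin M' :&: SC by [].
  by rewrite inE negb_and; apply/orP; left; apply/negP => /M'v; rewrite !inE eqxx.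
have vuX2 : vu \in X2 by apply: (subsetP sKX2); rewrite setU11.
have B2Gv : forall f, f \in B2 -> [/\ f \in X2, f != vu, f \in edges Gv & v \notin f].
  move=> f; rewrite inE => /andP [fK fX2].
  have fvu : f != vu by apply/eqP => E; move: fK; rewrite E setU11.
  have /djP d := hX2.1.2 f vu fX2 vuX2 fvu.
  have vf : v \notin f by apply/negP => vf; apply: (d v vf); rewrite !inE eqxx.
  by split => //; rewrite eGv vf (subsetP hX2.1.1) .
have B2SC : forall f, f \in B2 -> ~~ (f \subset C).
  move=> f fB; have [fX2 fvu fGv vf] := B2Gv f fB.
  move: fB; rewrite inE => /andP [fK _]; apply/negP => fC.
  suff fM' : f \in M' by move: fK; rewrite !inE fM' fC orbT.
  apply: (max_add hM'm); apply: matching_add => //; first exact: hM'm.1.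
  move=> g gM' gf; case: (boolP (g \subset C)) => gC.
    apply: hX2.1.2 fX2 _ _; last by rewrite eq_sym.
    by apply: (subsetP sKX2); rewrite !inE gM' gC orbT.
  exact: djW fC (split6 _ (M'Gv _ gM') gC).
set Y := vu |: ((M0 :&: SC) :|: B2).
have mY : matching G Y.
  apply: matching_add => //.
    split.
      apply/subsetP => f; rewrite in_setU => /orP [|fB].
        by rewrite in_setI => /andP [fM _]; exact: M0G.
      by have [fX2 _ _ _] := B2Gv f fB; apply: (subsetP hX2.1.1).
    move=> e1 e2; rewrite !in_setU !in_setI => /orP [/andP [h1 c1]|h1] /orP [/andP [h2 c2]|h2] ne.
    - exact: hM0m.1.2 h1 h2 ne.
    - have [_ _ e2Gv _] := B2Gv e2 h2; rewrite inSC in c1.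
      exact: djW c1 (split6 _ e2Gv (B2SC _ h2)).
    - have [_ _ e1Gv _] := B2Gv e1 h1; rewrite inSC in c2.
      by rewrite disjoint_sym; exact: djW c2 (split6 _ e1Gv (B2SC _ h1)).
    - by have [? _ _ _] := B2Gv e1 h1; have [? _ _ _] := B2Gv e2 h2; apply: hX2.1.2.
  move=> g; rewrite in_setU in_setI => /orP [/andP [gM gC]|gB] gvu.
    rewrite inSC in gC; apply: dj2; first exact: hv0.
    by apply/negP => ug; apply: (negP uC); apply: (subsetP gC).
  have [gX2 _ _ _] := B2Gv g gB.
  by apply: hX2.1.2 => //; rewrite eq_sym.
have cY : #|Y| = (#|M0 :&: SC| + #|B2|).+1.
  rewrite cardsU1 cardsU_dj; last first.
    by move=> f; rewrite in_setI inSC => /andP [_ fC]; apply/negP => /B2SC; rewrite fC.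
  suff -> : vu \notin (M0 :&: SC) :|: B2 by [].
  rewrite in_setU negb_or; apply/andP; split; apply/negP.
    by rewrite in_setI => /andP [/hv0]; rewrite !inE eqxx.
  by move=> /B2Gv [_ ]; rewrite eqxx.
have [Z [hZ sYZ]] := ext_max mY.
have le := subset_leq_card sYZ.
have e1 := heq _ _ hX1 hM0m.
have e2 := heq _ _ hX2 hM0m.
have e3 := heq _ _ hZ hM0m.
apply: (arith cX1 cM0 cX2 cK cY le e1 e2 e3).
Qed.
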